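(* For all $u\in R(F,H)$ and $x\in R(E)$, \[ x\bullet u^\eta=[x,u]^\eta, \] where $[x,u]=xu-ux$.
   Context: Let $f\in\mathbb{C}[H]$ be a polynomial. $R=R(f)$ is the associative $\mathbb{C}$-algebra generated by $E,F,H$ with relations $EF-FE=f(H)$, $HE-EH=E$, $HF-FH=-F$; the monomials $F^iH^jE^k$ form a basis of $R$. Let $R(E)=\mathbb{C}[E]$ and $R(F,H)$ the subalgebra generated by $F,H$. Fix an algebra homomorphism $\eta:R(E)\to\mathbb{C}$ with $\eta(E)\neq0$ and let $R_\eta(E)=\ker\eta$. Then $R=R(F,H)\oplus R\,R_\eta(E)$ as vector spaces; for $u\in R$, $u^\eta$ denotes its $R(F,H)$-component. The $\eta$-reduced action of $R(E)$ on $R(F,H)$ is $x\bullet v=(xv)^\eta-\eta(x)v$ for $x\in R(E)$, $v\in R(F,H)$. *)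

(* Defs.v *)
From Stdlib Require Import ClassicalEpsilon.
From mathcomp Require Import all_boot all_algebra.
From mathcomp Require Import complex Rstruct.
Set Implicit Arguments.
Unset Strict Implicit.
Unset Printing Implicit Defensive.
Import GRing.Theory.
Local Open Scope ring_scope.

Definition CC : fieldType := (Rdefinitions.R)[i].

Section Defs.
Variable A : algType CC.

Inductive subalg_gen (S : A -> Prop) : A -> Prop :=
  | sg_gen a : S a -> subalg_gen S a
  | sg_one : subalg_gen S 1
  | sg_add a b : subalg_gen S a -> subalg_gen S b -> subalg_gen S (a + b)
  | sg_scale (c : CC) a : subalg_gen S a -> subalg_gen S (c *: a)
  | sg_mul a b : subalg_gen S a -> subalg_gen S b -> subalg_gen S (a * b).

Inductive left_ideal_gen (I : A -> Prop) : A -> Prop :=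
  | lig_zero : left_ideal_gen I 0
  | lig_mul r y : I y -> left_ideal_gen I (r * y)
  | lig_add a b : left_ideal_gen I a -> left_ideal_gen I b -> left_ideal_gen I (a + b).

Variables E F H : A.

Definition R_relations (f : {poly CC}) : Prop :=
  [/\ E * F - F * E = horner_alg H f,
      H * E - E * H = E &
      H * F - F * H = - F].

Definition monom (i j k : nat) : A := F ^+ i * H ^+ j * E ^+ k.

Definition PBW_basis : Prop :=
  (forall a : A, exists (N : nat) (c : nat -> nat -> nat -> CC),
      a = \sum_(i < N) \sum_(j < N) \sum_(k < N) c i j k *: monom i j k)
  /\
  (forall (N : nat) (c : nat -> nat -> nat -> CC),
      \sum_(i < N) \sum_(j < N) \sum_(k < N) c i j k *: monom i j k = 0 ->
      forall i j k, (i < N)%N -> (j < N)%N -> (k < N)%N -> c i j k = 0).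

Definition RE : A -> Prop := subalg_gen (fun a => a = E).
Definition RFH : A -> Prop := subalg_gen (fun a => a = F \/ a = H).

(* eta : R(E) -> C is an algebra homomorphism (values outside R(E) irrelevant) *)
Definition alg_hom_on_RE (eta : A -> CC) : Prop :=
  [/\ eta 1 = 1,
      forall a b, RE a -> RE b -> eta (a + b) = eta a + eta b,
      forall (c : CC) a, RE a -> eta (c *: a) = c * eta a &
      forall a b, RE a -> RE b -> eta (a * b) = eta a * eta b].

Variable eta : A -> CC.

Definition RetaE (a : A) : Prop := RE a /\ eta a = 0.

(* u^eta : the R(F,H)-component of u in  R = R(F,H) (+) R R_eta(E) *)
Definition eta_part (u : A) : A :=
  epsilon (inhabits 0) (fun v => RFH v /\ left_ideal_gen RetaE (u - v)).

Definition eta_action (x v : A) : A := eta_part (x * v) - eta x *: v.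

End Defs.

(* Main.v *)
Require Import Defs.
From Stdlib Require Import ClassicalEpsilon.
From mathcomp Require Import all_boot all_algebra.
From mathcomp Require Import complex Rstruct zify.
Set Implicit Arguments. Unset Strict Implicit. Unset Printing Implicit Defensive.
Import GRing.Theory.
Local Open Scope ring_scope.

Section Proof.
Variable A : algType CC.
Variables E F H : A.
Variable eta : A -> CC.
Hypothesis Hhom : alg_hom_on_RE E eta.

Let e := eta E.
Let y0 : A := E + (- e) *: 1.

Lemma RE_y0 : RE E y0.
Proof. apply: sg_add; [exact: sg_gen | exact/sg_scale/sg_one]. Qed.

Lemma eta_y0 : eta y0 = 0.
Proof.
case: Hhom => h1 hD hZ hM.
rewrite /y0 hD; [|exact: sg_gen|exact/sg_scale/sg_one].
by rewrite hZ ?h1 ?mulr1 ?subrr //; exact: sg_one.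
Qed.

Lemma RE_dec x : RE E x -> exists q, x - eta x *: 1 = q * y0.
Proof.
case: Hhom => h1 hD hZ hM.
elim=> [a -> | | a b Ha [qa IHa] Hb [qb IHb] | c a Ha [qa IHa] | a b Ha [qa IHa] Hb [qb IHb]].
- by exists 1; rewrite mul1r /y0 scaleNr.
- by exists 0; rewrite mul0r h1 scale1r subrr.
- exists (qa + qb); rewrite hD // mulrDl -IHa -IHb scalerDl.
  by rewrite opprD addrACA.
- exists (c *: qa); rewrite hZ // -scalerAl -IHa scalerBr scalerA.
  done.
- exists (a * qb + eta b *: qa).
  rewrite hM // mulrDl -mulrA -IHb -scalerAl -IHa.
  rewrite mulrBr scalerBr -scalerAr mulr1 scalerA mulrC addrA subrK.
  done.
Qed.

Lemma lig_dec a : left_ideal_gen (RetaE E eta) a -> exists r, a = r * y0.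
Proof.
elim=> [| r y [Hy Hy0] | a1 b1 _ [r1 ->] _ [r2 ->]].
- by exists 0; rewrite mul0r.
- have [q Hq] := RE_dec Hy. rewrite Hy0 scale0r subr0 in Hq.
  by exists (r * q); rewrite Hq mulrA.
- by exists (r1 + r2); rewrite mulrDl.
Qed.

Lemma lig_of r : left_ideal_gen (RetaE E eta) (r * y0).
Proof. apply: lig_mul; split; [exact: RE_y0 | exact: eta_y0]. Qed.

Lemma Epow k : exists p, E ^+ k - e ^+ k *: 1 = p * y0.
Proof.
elim: k => [|k [p Hp]].
- by exists 0; rewrite !expr0 scale1r subrr mul0r.
exists (E ^+ k + e *: p).
rewrite mulrDl -scalerAl -Hp /y0 mulrDr -scalerAr mulr1 -exprSr.
rewrite scalerBr scalerA -exprS scaleNr addrA subrK //.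
Qed.

Lemma RFH_pow (a : A) n : RFH F H a -> RFH F H (a ^+ n).
Proof. move=> Ha; elim: n => [|n IH]; first exact: sg_one. by rewrite exprS; apply: sg_mul. Qed.

Lemma RFH_FH i j : RFH F H (F ^+ i * H ^+ j).
Proof. by apply: sg_mul; apply: RFH_pow; apply: sg_gen; [left|right]. Qed.

Definition Pex (a : A) := exists v r, RFH F H v /\ a - v = r * y0.

Lemma Pex_all : (forall a : A, exists (N : nat) (c : nat -> nat -> nat -> CC),
      a = \sum_(i < N) \sum_(j < N) \sum_(k < N) c i j k *: monom E F H i j k) ->
  forall a, Pex a.
Proof.
move=> Hsp a; have [N [c ->]] := Hsp a.
have P0 : Pex 0.
  exists 0, 0; split; last by rewrite subr0 mul0r.
  by rewrite -(scale0r (1:A)); apply: sg_scale; apply: sg_one.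
have PD : forall a b, Pex a -> Pex b -> Pex (a + b).
  move=> a1 b1 [v1 [r1 [H1 E1]]] [v2 [r2 [H2 E2]]].
  exists (v1 + v2), (r1 + r2); split; first exact: sg_add.
  by rewrite mulrDl -E1 -E2 opprD addrACA.
apply: big_ind => // i _; apply: big_ind => // j _; apply: big_ind => // k _.
have [p Hp] := Epow k.
exists ((c i j k * e ^+ k) *: (F ^+ i * H ^+ j)), (c i j k *: (F ^+ i * H ^+ j * p)).
split; first exact/sg_scale/RFH_FH.
rewrite -scalerAl -(mulrA _ p) -Hp mulrBr -scalerAr mulr1 scalerBr scalerA /monom.
by [].
Qed.

Hypothesis HFrel : H * F - F * H = - F.

Definition CH := subalg_gen (fun a : A => a = H).

Lemma CH_comm q : CH q -> exists q', CH q' /\ q * F = F * q'.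
Proof.
elim=> [a -> | | a b _ [qa [Ha Ea]] _ [qb [Hb Eb]] | c a _ [qa [Ha Ea]] | a b _ [qa [Ha Ea]] _ [qb [Hb Eb]]].
- exists (H + (-1) *: 1); split.
    by apply: sg_add; [exact: sg_gen | exact/sg_scale/sg_one].
  rewrite mulrDr -scalerAr mulr1 scaleN1r.
  by apply/eqP; rewrite -subr_eq0 opprD opprK addrA HFrel addNr.
- by exists 1; split; [exact: sg_one | rewrite mul1r mulr1].
- by exists (qa + qb); split; [exact: sg_add | rewrite mulrDl mulrDr Ea Eb].
- by exists (c *: qa); split; [exact: sg_scale | rewrite -scalerAl Ea scalerAr].
- by exists (qa * qb); split; [exact: sg_mul | rewrite -mulrA Eb mulrA Ea mulrA].
Qed.

Lemma CH_commF i q : CH q -> exists q', CH q' /\ q * F ^+ i = F ^+ i * q'.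
Proof.
elim: i q => [|i IH] q Hq; first by exists q; rewrite !expr0 mul1r mulr1.
have [q1 [H1 E1]] := CH_comm Hq.
have [q2 [H2 E2]] := IH q1 H1.
by exists q2; split => //; rewrite exprS mulrA E1 -mulrA E2 mulrA.
Qed.

Inductive SS : A -> Prop :=
 | SS0 : SS 0
 | SS1 i q : CH q -> SS (F ^+ i * q)
 | SS2 a b : SS a -> SS b -> SS (a + b).

Lemma SS_mul a b : SS a -> SS b -> SS (a * b).
Proof.
move=> Ha; elim: Ha b => [| i q Hq | a1 b1 _ IH1 _ IH2] b Hb.
- by rewrite mul0r; exact: SS0.
- elim: Hb => [| j q' Hq' | a2 b2 _ IH1 _ IH2].
  + by rewrite mulr0; exact: SS0.
  + have [q2 [H2 E2]] := CH_commF j Hq.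
    by rewrite mulrA -(mulrA _ q) E2 mulrA -exprD -mulrA; apply: SS1; apply: sg_mul.
  + by rewrite mulrDr; apply: SS2.
- by rewrite mulrDl; apply: SS2; [apply: IH1 | apply: IH2].
Qed.

Lemma SS_scale c a : SS a -> SS (c *: a).
Proof.
elim=> [| i q Hq | a1 b1 _ IH1 _ IH2].
- by rewrite scaler0; exact: SS0.
- by rewrite scalerAr; apply: SS1; apply: sg_scale.
- by rewrite scalerDr; apply: SS2.
Qed.

Lemma RFH_SS v : RFH F H v -> SS v.
Proof.
elim=> [a [->|->] | | a b _ IH1 _ IH2 | c a _ IH | a b _ IH1 _ IH2].
- by rewrite -(mulr1 F) -(expr1 F); apply: SS1; apply: sg_one.
- by rewrite -(mul1r H) -(expr0 F); apply: SS1; apply: sg_gen.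
- by rewrite -(mul1r 1) -{1}(expr0 F); apply: SS1; apply: sg_one.
- exact: SS2.
- exact: SS_scale.
- exact: SS_mul.
Qed.

Inductive PH : A -> Prop :=
 | PH0 : PH 0
 | PH1 (c : CC) l : PH (c *: H ^+ l)
 | PH2 a b : PH a -> PH b -> PH (a + b).

Lemma PH_scale c a : PH a -> PH (c *: a).
Proof.
elim=> [| c' l | a1 b1 _ IH1 _ IH2].
- by rewrite scaler0; exact: PH0.
- by rewrite scalerA; exact: PH1.
- by rewrite scalerDr; apply: PH2.
Qed.

Lemma PH_mul a b : PH a -> PH b -> PH (a * b).
Proof.
move=> Ha; elim: Ha b => [| c l | a1 b1 _ IH1 _ IH2] b Hb.
- by rewrite mul0r; exact: PH0.
- elim: Hb => [| c' m | a2 b2 _ IH1 _ IH2].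
  + by rewrite mulr0; exact: PH0.
  + by rewrite -scalerAl -scalerAr scalerA -exprD; exact: PH1.
  + by rewrite mulrDr; apply: PH2.
- by rewrite mulrDl; apply: PH2; [apply: IH1 | apply: IH2].
Qed.

Lemma CH_PH q : CH q -> PH q.
Proof.
elim=> [a -> | | a b _ IH1 _ IH2 | c a _ IH | a b _ IH1 _ IH2].
- by have := PH1 1 1; rewrite scale1r expr1.
- by have := PH1 1 0; rewrite scale1r expr0.
- exact: PH2.
- exact: PH_scale.
- exact: PH_mul.
Qed.

Inductive TT : A -> Prop :=
 | TT0 : TT 0
 | TT1 (c : CC) i j : TT (c *: monom E F H i j 0)
 | TT2 a b : TT a -> TT b -> TT (a + b).

Lemma SS_TT v : SS v -> TT v.
Proof.
elim=> [| i q Hq | a b _ IH1 _ IH2]; [exact: TT0 | | exact: TT2].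
elim: (CH_PH Hq) => [| c l | a b _ IH1 _ IH2].
- by rewrite mulr0; exact: TT0.
- by rewrite -scalerAr -(mulr1 (F ^+ i * H ^+ l)) -(expr0 E); exact: TT1.
- by rewrite mulrDr; exact: TT2.
Qed.

Definition cube N (d : nat -> nat -> nat -> CC) : A :=
  \sum_(i < N) \sum_(j < N) \sum_(k < N) d i j k *: monom E F H i j k.
Definition fsupp N (d : nat -> nat -> nat -> CC) :=
  forall i j k, (N <= i)%N \/ (N <= j)%N \/ (N <= k)%N -> d i j k = 0.

Lemma fsupp_le N K d : fsupp N d -> (N <= K)%N -> fsupp K d.
Proof.
move=> Hd le i j k H0; apply: Hd.
by case: H0 => [h|[h|h]]; [left|right;left|right;right]; exact: leq_trans le h.
Qed.

Lemma sum_pad (V : zmodType) N M (g : nat -> V) : (N <= M)%N ->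
  (forall i, (N <= i)%N -> g i = 0) -> \sum_(i < M) g i = \sum_(i < N) g i.
Proof.
move=> le Hg; rewrite -(subnKC le); elim: (M - N)%N => [|m IH]; first by rewrite addn0.
by rewrite addnS big_ord_recr /= IH Hg ?addr0 // leq_addr.
Qed.

Lemma cube_pad N M d : fsupp N d -> (N <= M)%N -> cube M d = cube N d.
Proof.
rewrite /cube => Hd le.
rewrite (@sum_pad _ N M (fun i => \sum_(j < M) \sum_(k < M) d i j k *: monom E F H i j k)) //; last first.
  by move=> i Hi; apply: big1 => j _; apply: big1 => k _; rewrite Hd ?scale0r //; left.
apply: eq_bigr => i _.
rewrite (@sum_pad _ N M (fun j => \sum_(k < M) d i j k *: monom E F H i j k)) //; last first.
  by move=> j Hj; apply: big1 => k _; rewrite Hd ?scale0r //; right; left.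
apply: eq_bigr => j _.
rewrite (@sum_pad _ N M (fun k => d i j k *: monom E F H i j k)) //.
by move=> k Hk; rewrite Hd ?scale0r //; right; right.
Qed.

Lemma cubeD N d1 d2 : cube N (fun i j k => d1 i j k + d2 i j k) = cube N d1 + cube N d2.
Proof.
rewrite /cube -big_split; apply: eq_bigr => i _; rewrite -big_split; apply: eq_bigr => j _.
by rewrite -big_split; apply: eq_bigr => k _; rewrite scalerDl.
Qed.

Lemma cubeZ N c d : cube N (fun i j k => c * d i j k) = c *: cube N d.
Proof.
rewrite /cube scaler_sumr; apply: eq_bigr => i _; rewrite scaler_sumr; apply: eq_bigr => j _.
by rewrite scaler_sumr; apply: eq_bigr => k _; rewrite scalerA.
Qed.

Definition shift (d : nat -> nat -> nat -> CC) i j k :=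
  if k is k'.+1 then d i j k' else 0.

Lemma cube_mulE M d : fsupp M d -> cube M d * E = cube M.+1 (shift d).
Proof.
move=> Hd; rewrite /cube.
rewrite (@sum_pad _ M M.+1 (fun i => \sum_(j < M.+1) \sum_(k < M.+1) shift d i j k *: monom E F H i j k)) //; last first.
  move=> i Hi; apply: big1 => j _; apply: big1 => k _.
  by case: k => [[|k] Hk] /=; rewrite ?scale0r // Hd ?scale0r //; left.
rewrite mulr_suml; apply: eq_bigr => i _.
rewrite (@sum_pad _ M M.+1 (fun j => \sum_(k < M.+1) shift d i j k *: monom E F H i j k)) //; last first.
  move=> j Hj; apply: big1 => k _.
  by case: k => [[|k] Hk] /=; rewrite ?scale0r // Hd ?scale0r //; right; left.
rewrite mulr_suml; apply: eq_bigr => j _.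
rewrite big_ord_recl /= scale0r add0r mulr_suml; apply: eq_bigr => k _.
by rewrite -scalerAl /monom -[_ * E ^+ k * E]mulrA -exprSr /bump add0n.
Qed.

Lemma cube_single (c : CC) i j :
  cube (maxn i j).+1 (fun i' j' k' => if [&& i' == i, j' == j & k' == 0%N] then c else 0)
  = c *: monom E F H i j 0.
Proof.
have Hi : (i < (maxn i j).+1)%N by rewrite ltnS leq_maxl.
have Hj : (j < (maxn i j).+1)%N by rewrite ltnS leq_maxr.
rewrite /cube (bigD1 (Ordinal Hi)) //= [X in _ + X]big1 ?addr0; last first.
  move=> i' Hne; apply: big1 => j' _; apply: big1 => k' _.
  rewrite (_ : (nat_of_ord i' == i) = false) ?scale0r //.
  by apply: contraNF Hne => /eqP Heq; apply/eqP; apply: val_inj.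
rewrite (bigD1 (Ordinal Hj)) //= [X in _ + X]big1 ?addr0; last first.
  move=> j' Hne; apply: big1 => k' _.
  rewrite (_ : (nat_of_ord j' == j) = false) ?andbF ?scale0r //.
  by apply: contraNF Hne => /eqP Heq; apply/eqP; apply: val_inj.
rewrite (bigD1 ord0) //= [X in _ + X]big1 ?addr0; last first.
  move=> k' Hne.
  rewrite (_ : (nat_of_ord k' == 0%N) = false) ?andbF ?scale0r //.
  by apply: contraNF Hne => /eqP Heq; apply/eqP; apply: val_inj.
by rewrite !eqxx.
Qed.

Definition Rep0 v := exists N d, fsupp N d /\ (forall i j k, k != 0%N -> d i j k = 0)
  /\ v = cube N d.

Lemma TT_Rep0 v : TT v -> Rep0 v.
Proof.
elim=> [| c i j | a b _ [N1 [d1 [F1 [Z1 ->]]]] _ [N2 [d2 [F2 [Z2 ->]]]]].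
- exists 0%N, (fun _ _ _ => 0); split => //; split => //.
  by rewrite /cube big_ord0.
- exists (maxn i j).+1, (fun i' j' k' => if [&& i' == i, j' == j & k' == 0%N] then c else 0).
  split; [|split; last by rewrite cube_single].
    move=> i' j' k' Hc; case: ifP => // /and3P [/eqP Ei /eqP Ej /eqP Ek].
    by exfalso; subst; lia.
  by move=> i' j' k' /negbTE ->; rewrite !andbF.
- exists (maxn N1 N2), (fun i j k => d1 i j k + d2 i j k); split; [|split].
  + move=> i j k Hc; rewrite F1 ?F2 ?addr0 //.
      by case: Hc => [h|[h|h]]; [left|right;left|right;right]; lia.
    by case: Hc => [h|[h|h]]; [left|right;left|right;right]; lia.
  + by move=> i j k Hk; rewrite Z1 ?Z2 ?addr0.
  + rewrite cubeD (cube_pad F1) ?(cube_pad F2) //; lia.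
Qed.

Lemma Rep0_y0 : PBW_basis E F H -> forall v a, Rep0 v -> v = a * y0 -> v = 0.
Proof.
move=> [Hsp Hind] v a [N [d [Fd [Zd Ev]]]] Eva.
have [M [c Ea]] := Hsp a.
pose e' i j k := if [&& (i < M)%N, (j < M)%N & (k < M)%N] then c i j k else 0.
have Fe : fsupp M e'.
  move=> i j k Hc; rewrite /e'; case: ifP => // /and3P [h1 h2 h3]; exfalso.
  by case: Hc => [h|[h|h]]; lia.
have Ea' : a = cube M e'.
  rewrite Ea /cube; apply: eq_bigr => i _; apply: eq_bigr => j _; apply: eq_bigr => k _.
  by rewrite /e' !ltn_ord.
have Fs : fsupp M.+1 (shift e').
  move=> i j k Hc; rewrite /shift; case: k Hc => [|k] Hc //; apply: Fe.
  by case: Hc => [h|[h|h]]; [left|right;left|right;right]; lia.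
have Ft : fsupp M (fun i j k => - e * e' i j k).
  by move=> i j k Hc; rewrite Fe ?mulr0.
pose K := maxn N M.+1.
pose D i j k := d i j k + (- 1) * (shift e' i j k + (- e * e' i j k)).
have HD : cube K D = 0.
  rewrite /D cubeD cubeZ cubeD (cube_pad Fd) ?(cube_pad Fs) ?(cube_pad Ft); try lia.
  rewrite cubeZ -cube_mulE // -Ea' -Ev Eva /y0 mulrDr -scalerAr mulr1.
  by rewrite scaleN1r subrr.
have FK : forall i j k, D i j k = 0.
  move=> i j k; case: (boolP [&& (i < K)%N, (j < K)%N & (k < K)%N]).
    by move=> /and3P [h1 h2 h3]; exact: Hind HD i j k h1 h2 h3.
  move=> Hn.
  have Hc : (K <= i)%N \/ (K <= j)%N \/ (K <= k)%N.
    case: (ltnP i K) => hi; last by left.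
    case: (ltnP j K) => hj; last by right; left.
    case: (ltnP k K) => hk; last by right; right.
    by rewrite hi hj hk in Hn.
  have hN : (N <= K)%N by rewrite leq_maxl.
  have hM1 : (M.+1 <= K)%N by rewrite leq_maxr.
  have hM : (M <= K)%N by lia.
  rewrite /D (fsupp_le Fd hN Hc) (fsupp_le Fs hM1 Hc).
  by rewrite (fsupp_le Ft hM Hc) addr0 mulr0 addr0.
have Rec : forall i j k, e' i j k = e * e' i j k.+1.
  move=> i j k; have := FK i j k.+1; rewrite /D Zd //= mulN1r add0r mulNr.
  by move/eqP; rewrite oppr_eq0 subr_eq0 => /eqP.
have Z0 : forall n i j k, (M <= k + n)%N -> e' i j k = 0.
  elim=> [|n IH] i j k h; first by apply: Fe; right; right; lia.
  by rewrite Rec IH ?mulr0 //; lia.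
have Ha0 : a = 0.
  rewrite Ea' /cube; apply: big1 => i _; apply: big1 => j _; apply: big1 => k _.
  by rewrite (Z0 M) ?scale0r //; lia.
by rewrite Eva Ha0 mul0r.
Qed.

Lemma zmod_id (V : zmodType) (a b c d p q : V) :
  a - b - (c - d) = a - p + (p - c) - (b - q) - (q - d).
Proof.
rewrite (addrA (a - p)) subrK -(addrA _ (- (b - q))) -opprD (addrA (b - q)) subrK.
by rewrite !opprB addrACA [RHS]addrACA [- c + _]addrC.
Qed.

Hypothesis Hpbw : PBW_basis E F H.

Lemma ep_spec u : RFH F H (eta_part E F H eta u) /\
   left_ideal_gen (RetaE E eta) (u - eta_part E F H eta u).
Proof.
have Hex : exists v, RFH F H v /\ left_ideal_gen (RetaE E eta) (u - v).
  have [v [r [Hv Er]]] := Pex_all (proj1 Hpbw) u.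
  by exists v; split => //; rewrite Er; exact: lig_of.
exact: (epsilon_spec (inhabits (0:A))
  (fun v => RFH F H v /\ left_ideal_gen (RetaE E eta) (u - v)) Hex).
Qed.

Lemma ep_uniq u v : RFH F H v -> left_ideal_gen (RetaE E eta) (u - v) ->
  eta_part E F H eta u = v.
Proof.
move=> Hv Lv; have [Hw Lw] := ep_spec u.
have [r1 E1] := lig_dec Lv; have [r2 E2] := lig_dec Lw.
set w := eta_part E F H eta u in Hw Lw E2 *.
have HR : RFH F H (w - v) by apply: sg_add => //; rewrite -scaleN1r; apply: sg_scale.
have Ewv : w - v = (r1 - r2) * y0.
  by rewrite mulrBl -E1 -E2 opprB [RHS]addrC addrA subrK.
have := Rep0_y0 Hpbw (TT_Rep0 (SS_TT (RFH_SS HR))) Ewv.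
by move/eqP; rewrite subr_eq0 => /eqP.
Qed.

Lemma main_sec u x : RE E x ->
  eta_action E F H eta x (eta_part E F H eta u)
  = eta_part E F H eta (x * u - u * x).
Proof.
move=> Hx; set v := eta_part E F H eta u.
have [Hv Lv] := ep_spec u; have [r Er] := lig_dec Lv.
set w := eta_part E F H eta (x * v).
have [Hw Lw] := ep_spec (x * v); have [r' Er'] := lig_dec Lw.
have [q Eq] := RE_dec Hx.
rewrite /eta_action -/w; symmetry; apply: ep_uniq.
  by apply: sg_add => //; rewrite -scaleNr; apply: sg_scale.
have -> : x * u - u * x - (w - eta x *: v) = (x * r + r' - u * q - eta x *: r) * y0.
  rewrite !mulrBl mulrDl -!mulrA -Er -Er' -Eq -scalerAl -Er.
  rewrite mulrBr mulrBr scalerBr -scalerAr mulr1.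
  exact: zmod_id.
exact: lig_of.
Qed.
End Proof.

Theorem mainTheorem18 (A : algType CC) (f : {poly CC}) (E F H : A)
  (eta : A -> CC) :
  R_relations E F H f ->
  PBW_basis E F H ->
  alg_hom_on_RE E eta ->
  eta E != 0 ->
  forall u x : A, RFH F H u -> RE E x ->
    eta_action E F H eta x (eta_part E F H eta u)
    = eta_part E F H eta (x * u - u * x).
Proof.
move=> [_ _ HF] Hpbw Hhom _ u x _ Hx.
exact: main_sec.
Qed.
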